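(* Let $\Sigma$ be a finite reduct of the label cover signature, $\mathbf P^\Sigma$ the $\Sigma$-reduct of the label cover template $\mathbf P$, and $\mathbf B$ a structure. If $\gamma$ is a gadget from $\Sigma$-structures to structures of the signature of $\mathbf B$ such that $\gamma(\mathbf P^\Sigma)\to\mathbf B$, then $\gamma(\mathbf S)\to\pi_{\mathbf B}(\mathbf S)$ for every $\Sigma$-structure $\mathbf S$.
   Context: Structures. A (multisorted relational) signature consists of types and relation symbols, each symbol $R$ having an arity $\mathrm{ar}_R$, a tuple of types. A structure $\mathbf A$ consists of a set $A_t$ per type and relations $R^{\mathbf A}\subseteq A_{\mathrm{ar}_R(1)}\times\dots\times A_{\mathrm{ar}_R(k)}$. A homomorphism is a type-preserving family of maps preserving all relations; write $\mathbf A\to\mathbf B$. For a finite set $X$, $\mathbf B^X$ has domains $B_t^X$ (maps $X\to B_t$) and $(b_1,\dots,b_m)\in R^{\mathbf B^X}$ iff $(b_1(i),\dots,b_m(i))\in R^{\mathbf B}$ for all $i\in X$. Label cover. The label cover signature has a type $X$ for each finite set $X$ and a binary symbol $E_\pi$ of arity $(X,Y)$ for each map $\pi\colon X\to Y$. The label cover template $\mathbf P$ has domain $P_X=X$ for each type $X$ and $E_\pi^{\mathbf P}=\{(x,\pi(x))\mid x\in X\}$. A finite reduct $\Sigma$ consists of finitely many of these types and finitely many of these symbols (with their types); the $\Sigma$-reduct of a structure keeps only the domains and relations named in $\Sigma$. Gadgets. A gadget $\gamma$ from $\Pi$- to $\Sigma'$-structures consists of a $\Sigma'$-structure $\mathbf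 D_t^\gamma$ for each $\Pi$-type $t$, a $\Sigma'$-structure $\mathbf R^\gamma$ for each $\Pi$-symbol $R$, and homomorphisms $p_{R,i}^\gamma\colon\mathbf D^\gamma_{\mathrm{ar}_R(i)}\to\mathbf R^\gamma$ for $i\in[k]$, $k$ the arity of $R$. $\gamma(\mathbf A)$: take a copy of $\mathbf D^\gamma_t$ for each $a\in A_t$ (elements $(a;d)$) and a copy of $\mathbf R^\gamma$ for each $a\in R^{\mathbf A}$ (elements $(a;e)$); identify $(a;p^\gamma_{R,i}(e))$ with $(a_i;e)$ for all $a\in R^{\mathbf A}$, $i$, $e$; output the quotient by the generated equivalence relation with relations the images. Universal gadget. For a structure $\mathbf B$ and a structure $\mathbf S$ in (a reduct of) the label cover signature, $\pi_{\mathbf B}(\mathbf S)$ is obtained by taking a copy of $\mathbf B^X$ for each element $s$ of type $X$ (elements $(s;b)$, $b\colon X\to B_t$), identifying $(s;b\circ\sigma)$ with $(t;b)$ for each $(s,t)\in E_\sigma^{\mathbf S}$ with $\sigma\colon X\to Y$ and each $b\colon Y\to B_u$, and taking the quotient by the generated equivalence relation, with relations the images of those of the copies. *)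

(* Defs.v *)
From Stdlib Require Import Relation_Operators.
From HB Require Import structures.
From mathcomp Require Import all_boot.


Record signature := Signature {
  sort : Type;
  sym : Type;
  arity : sym -> nat;
  ar : forall R : sym, 'I_(arity R) -> sort }.
Arguments ar {s} R i.
Arguments arity {s} R.

Definition tuple_of {s : signature} (dom : sort s -> Type) (R : sym s) :=
  forall i : 'I_(arity R), dom (ar R i).

Record str (s : signature) := mkStr {
  dom : sort s -> Type;
  rel : forall R : sym s, tuple_of dom R -> Prop }.
Arguments dom {s} _ _.
Arguments rel {s} _ R _.
Arguments mkStr {s} _ _.

Definition is_hom {s : signature} (A B : str s)
    (f : forall t, dom A t -> dom B t) : Prop :=
  forall (R : sym s) (a : tuple_of (dom A) R),
    rel A R a -> rel B R (fun i => f _ (a i)).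

Definition homto {s : signature} (A B : str s) : Prop :=
  exists f, is_hom A B f.

Definition pow_str {s : signature} (B : str s) (X : Type) : str s :=
  @mkStr s (fun u => X -> dom B u)
    (fun R b => forall x : X, rel B R (fun i => b i x)).

Definition sum_str {s : signature} {K : Type} (F : K -> str s) : str s :=
  @mkStr s (fun u => {k : K & dom (F k) u})
    (fun R x => exists (k : K) (y : tuple_of (dom (F k)) R),
        rel (F k) R y /\
        forall i, x i = existT (fun k => dom (F k) (ar R i)) k (y i)).

Definition eqcls {T : Type} (gen : T -> T -> Prop) (x : T) : T -> Prop :=
  fun y => clos_refl_sym_trans T gen x y.

Definition quot_str {s : signature} {A : str s}
    (gen : forall u, dom A u -> dom A u -> Prop) : str s :=
  @mkStr s (fun u => {P : dom A u -> Prop | exists x, P = eqcls (gen u) x})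
    (fun R c => exists a : tuple_of (dom A) R,
        rel A R a /\ forall i, proj1_sig (c i) = eqcls (gen _) (a i)).

Record gadget (s1 s2 : signature) := mkGadget {
  gD : sort s1 -> str s2;
  gR : sym s1 -> str s2;
  gp : forall (R : sym s1) (i : 'I_(arity R)) u,
         dom (gD (ar R i)) u -> dom (gR R) u;
  gp_hom : forall (R : sym s1) (i : 'I_(arity R)),
         is_hom (gD (ar R i)) (gR R) (gp R i) }.
Arguments gD {s1 s2} g t.
Arguments gR {s1 s2} g R.
Arguments gp {s1 s2} g R i u _.

(* indices of copies in gamma(A): one per element a of A_t, one per tuple
   a in R^A *)
Definition gad_index {s1 : signature} (A : str s1) : Type :=
  ({t : sort s1 & dom A t} +
   {R : sym s1 & {a : tuple_of (dom A) R | rel A R a}})%type.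

Definition gad_copy {s1 s2 : signature} (g : gadget s1 s2) (A : str s1)
    (k : gad_index A) : str s2 :=
  match k with
  | inl x => gD g (projT1 x)
  | inr y => gR g (projT1 y)
  end.

(* identify (a; p_{R,i}(e)) with (a_i; e) *)
Definition gad_gen {s1 s2 : signature} (g : gadget s1 s2) (A : str s1) u
    (x y : dom (sum_str (gad_copy g A)) u) : Prop :=
  exists (R : sym s1) (a : {a : tuple_of (dom A) R | rel A R a})
         (i : 'I_(arity R)) (e : dom (gD g (ar R i)) u),
    x = existT (fun k => dom (gad_copy g A k) u)
          (inr (existT _ R a)) (gp g R i u e) /\
    y = existT (fun k => dom (gad_copy g A k) u)
          (inl (existT _ (ar R i) (proj1_sig a i))) e.

Definition gad_apply {s1 s2 : signature} (g : gadget s1 s2) (A : str s1)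
    : str s2 :=
  quot_str (gad_gen g A).

(* finitely many types (indexed by lcI, the type with index i being the
   finite set lcX i) and finitely many symbols E_pi (indexed by lcJ, symbol j
   being E_{lc_map j} of arity (lcX (lc_src j), lcX (lc_tgt j))). *)
Record lc_reduct := mkLC {
  lcI : finType;
  lcJ : finType;
  lcX : lcI -> finType;
  lc_src : lcJ -> lcI;
  lc_tgt : lcJ -> lcI;
  lc_map : forall j : lcJ, lcX (lc_src j) -> lcX (lc_tgt j) }.
Arguments lcX {_} i.
Arguments lc_src {_} j.
Arguments lc_tgt {_} j.
Arguments lc_map {_} j _.

Definition lc_ar {Sg : lc_reduct} (j : lcJ Sg) (i : 'I_2) : lcI Sg :=
  if val i == 0 then lc_src j else lc_tgt j.

Definition lc_sig (Sg : lc_reduct) : signature :=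
  @Signature (lcI Sg) (lcJ Sg) (fun _ => 2) (@lc_ar Sg).

Definition fst_of {Sg : lc_reduct} {D : lcI Sg -> Type} {j : lcJ Sg}
    (a : @tuple_of (lc_sig Sg) D j) : D (lc_src j) := a ord0.

Definition snd_of {Sg : lc_reduct} {D : lcI Sg -> Type} {j : lcJ Sg}
    (a : @tuple_of (lc_sig Sg) D j) : D (lc_tgt j) := a ord_max.

Definition lc_template (Sg : lc_reduct) : str (lc_sig Sg) :=
  @mkStr (lc_sig Sg) (fun i => (lcX i : Type))
    (fun j a => lc_map j (fst_of a) = snd_of a).

Definition piB_copy {sB : signature} (B : str sB) {Sg : lc_reduct}
    (S : str (lc_sig Sg)) (k : {i : lcI Sg & dom S i}) : str sB :=
  pow_str B (lcX (projT1 k)).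

(* identify (s; b o sigma) with (t; b) for (s,t) in E_sigma^S *)
Definition piB_gen {sB : signature} (B : str sB) {Sg : lc_reduct}
    (S : str (lc_sig Sg)) u (x y : dom (sum_str (piB_copy B S)) u) : Prop :=
  exists (j : lcJ Sg) (a : @tuple_of (lc_sig Sg) (dom S) j)
         (b : lcX (lc_tgt j) -> dom B u),
    rel S j a /\
    x = existT (fun k => dom (piB_copy B S k) u)
          (existT (fun i => dom S i) (lc_src j) (fst_of a))
          (fun z => b (lc_map j z)) /\
    y = existT (fun k => dom (piB_copy B S k) u)
          (existT (fun i => dom S i) (lc_tgt j) (snd_of a)) b.

Definition piB {sB : signature} (B : str sB) {Sg : lc_reduct}
    (S : str (lc_sig Sg)) : str sB :=
  quot_str (piB_gen B S).

(* Main.v *)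
Require Import Defs.
From HB Require Import structures.
From mathcomp Require Import all_boot.
From Stdlib Require Import Relation_Operators ProofIrrelevance FunctionalExtensionality PropExtensionality ClassicalEpsilon.
Require Import Defs.

Definition cls {T : Type} (gen : T -> T -> Prop) (x : T)
  : {Q : T -> Prop | exists y, Q = eqcls gen y} :=
  exist _ (eqcls gen x) (ex_intro _ x erefl).

Lemma eqcls_eq {T : Type} (gen : T -> T -> Prop) x y :
  clos_refl_sym_trans T gen x y -> eqcls gen x = eqcls gen y.
Proof.
move=> H; apply: functional_extensionality => z.
apply: propositional_extensionality; rewrite /eqcls; split => H2.
- apply: rst_trans (rst_sym _ _ _ _ H) H2.
- apply: rst_trans H H2.
Qed.

Lemma cls_eq {T : Type} (gen : T -> T -> Prop) x y :
  clos_refl_sym_trans T gen x y -> cls gen x = cls gen y.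
Proof. by move=> H; apply: subset_eq_compat; apply: eqcls_eq. Qed.

Lemma quot_hom {s : signature} (A C : str s)
  (gA : forall u, dom A u -> dom A u -> Prop)
  (gC : forall u, dom C u -> dom C u -> Prop)
  (F : forall u, dom A u -> dom C u) :
  is_hom A C F ->
  (forall u x y, gA u x y -> clos_refl_sym_trans _ (gC u) (F u x) (F u y)) ->
  homto (quot_str gA) (quot_str gC).
Proof.
move=> hF resp.
have respc : forall u x y, clos_refl_sym_trans _ (gA u) x y ->
    clos_refl_sym_trans _ (gC u) (F u x) (F u y).
  move=> u x y; elim=> {x y}.
  - by move=> x y /resp.
  - by move=> x; apply: rst_refl.
  - by move=> x y _ H; apply: rst_sym.
  - by move=> x y z _ H1 _ H2; apply: rst_trans H1 H2.
exists (fun u (Q : dom (quot_str gA) u) =>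
  cls (gC u) (F u (proj1_sig (constructive_indefinite_description _ (proj2_sig Q))))).
move=> R c [a [Ha Hc]]; exists (fun i => F _ (a i)); split; first exact: hF.
move=> i /=; apply: eqcls_eq; apply: respc.
case: (constructive_indefinite_description _ _) => r /= Hr.
have : eqcls (gA _) (a i) r by rewrite -Hc Hr; apply: rst_refl.
by move=> H; apply: rst_sym.
Qed.

Section Main.
Variables (Sg : lc_reduct) (sB : signature) (B : str sB)
  (g : gadget (lc_sig Sg) sB).
Let P := lc_template Sg.

Definition tup (j : lcJ Sg) (z : lcX (lc_src j))
  : @tuple_of (lc_sig Sg) (dom P) j :=
  fun i => match (val i == 0) as b return lcX (if b then lc_src j else lc_tgt j)
           with true => z | false => lc_map j z end.

Lemma tupP j z : rel P j (tup j z).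
Proof. by []. Qed.

Variable h : forall t, dom (gad_apply g P) t -> dom B t.
Variable S : str (lc_sig Sg).

Definition Fmap u (x : dom (sum_str (gad_copy g S)) u)
  : dom (sum_str (piB_copy B S)) u :=
  match x with existT k d =>
  match k as k0 return dom (gad_copy g S k0) u -> dom (sum_str (piB_copy B S)) u with
  | inl (existT t s) => fun d =>
      existT (fun k => dom (piB_copy B S k) u) (existT (fun i => dom S i) t s)
        (fun z : lcX t => h u (cls (gad_gen g P u)
           (existT (fun k => dom (gad_copy g P k) u) (inl (existT _ t z)) d)))
  | inr (existT j (exist a Ha)) => fun e =>
      existT (fun k => dom (piB_copy B S k) u)
        (existT (fun i => dom S i) (lc_src j) (fst_of a))
        (fun z : lcX (lc_src j) => h u (cls (gad_gen g P u)
           (existT (fun k => dom (gad_copy g P k) u)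
              (inr (existT _ j (exist _ (tup j z) (tupP j z)))) e)))
  end d end.


Hypothesis hh : is_hom (gad_apply g P) B h.

Lemma Fmap_hom : is_hom (sum_str (gad_copy g S)) (sum_str (piB_copy B S)) Fmap.
Proof.
move=> R x [k [y [Hy Hx]]].
case: k y Hy Hx => [[t s]|[j [a Ha]]] y Hy Hx.
- exists (existT _ t s).
  exists (fun i z => h _ (cls (gad_gen g P _)
     (existT (fun k => dom (gad_copy g P k) _) (inl (existT _ t z)) (y i)))).
  split; last by move=> i; rewrite Hx.
  move=> z /=; apply: hh.
  exists (fun i => existT (fun k => dom (gad_copy g P k) _) (inl (existT _ t z)) (y i)).
  split=> //; by exists (inl (existT _ t z)), y.
- exists (existT _ (lc_src j) (fst_of a)).
  exists (fun i z => h _ (cls (gad_gen g P _)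
     (existT (fun k => dom (gad_copy g P k) _)
        (inr (existT _ j (exist _ (tup j z) (tupP j z)))) (y i)))).
  split; last by move=> i; rewrite Hx.
  move=> z /=; apply: hh.
  exists (fun i => existT (fun k => dom (gad_copy g P k) _)
        (inr (existT _ j (exist _ (tup j z) (tupP j z)))) (y i)).
  split=> //; by exists (inr (existT _ j (exist _ (tup j z) (tupP j z)))), y.
Qed.

Lemma Fmap_resp u x y : gad_gen g S u x y ->
  clos_refl_sym_trans _ (piB_gen B S u) (Fmap u x) (Fmap u y).
Proof.
move=> [j [[a Ha] [i [e [-> ->]]]]].
revert e; case: i => [[|[|n]] Hi] // e.
- have E := eq_irrelevance Hi (ltn0Sn 1); subst Hi.
  match goal with |- clos_refl_sym_trans _ _ ?X ?Y => have -> : X = Y end;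
    last exact: rst_refl.
  rewrite /=.
  apply: (f_equal (existT _ _)); apply: functional_extensionality => z.
  apply: (f_equal (h u)); apply: cls_eq; apply: rst_step.
  by exists j, (exist _ (tup j z) (tupP j z)), ord0, e.
- have E := eq_irrelevance Hi (ltnSn 1); subst Hi.
  apply: rst_step.
  exists j, a, (fun z => h u (cls (gad_gen g P u)
     (existT (fun k => dom (gad_copy g P k) u) (inl (existT _ (lc_tgt j) z)) e))).
  split=> //; split=> //=.
  apply: (f_equal (existT _ _)); apply: functional_extensionality => z.
  apply: (f_equal (h u)); apply: cls_eq; apply: rst_step.
  by exists j, (exist _ (tup j z) (tupP j z)), ord_max, e.
Qed.

End Main.

Theorem mainTheorem16 (Sg : lc_reduct) (sB : signature) (B : str sB)
    (g : gadget (lc_sig Sg) sB) :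
  homto (gad_apply g (lc_template Sg)) B ->
  forall S : str (lc_sig Sg), homto (gad_apply g S) (piB B S).
Proof.
move=> [h hh] S.
refine (@quot_hom _ _ _ (gad_gen g S) (piB_gen B S) (Fmap Sg sB B g h S) _ _).
- exact: Fmap_hom.
- exact: Fmap_resp.
Qed.
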